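(* For every nonnegative integer $n$, $${}_{2}F_1\!\left[\begin{matrix}-3n & -3n+\frac12\\ & -4n+\frac23\end{matrix}\,\Big|\,\frac43\right]=\frac{1}{4^n}\,{}_{2}F_1\!\left[\begin{matrix}-n & -n+\frac12\\ & -2n+\frac56\end{matrix}\,\Big|\,1\right].$$
   Context: For complex parameters $\alpha_0,\alpha_1,\beta_1$ and $z\in\mathbb{C}$, ${}_2F_1\!\left[\begin{matrix}\alpha_0&\alpha_1\\&\beta_1\end{matrix}\Big|\,z\right]=\sum_{k\ge0}\frac{(\alpha_0)_k(\alpha_1)_k}{(\beta_1)_k}\frac{z^k}{k!}$, where $(\alpha)_0=1$ and $(\alpha)_k=\alpha(\alpha+1)\cdots(\alpha+k-1)$ for $k\ge1$. Since the first upper parameter is a nonpositive integer ($-3n$, resp. $-n$), both series terminate (at $k=3n$, resp. $k=n$), and the lower parameters are never nonpositive integers, so both sides are finite sums. *)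

(* Defs.v *)
From HB Require Import structures.
From mathcomp Require Import all_boot all_order all_algebra.
Set Implicit Arguments. Unset Strict Implicit. Unset Printing Implicit Defensive.
Import Order.TTheory GRing.Theory Num.Theory.
Local Open Scope ring_scope.

Definition poch (R : ringType) (a : R) (k : nat) : R :=
  \prod_(i < k) (a + i%:R).

Definition hyp2F1_term (R : fieldType) (a0 a1 b1 z : R) (k : nat) : R :=
  poch a0 k * poch a1 k / poch b1 k * z ^+ k / (k`!)%:R.

(* Partial sum of the 2F1 series over k = 0..N.  When a0 = -N this is the
   full (terminating) hypergeometric series, since (a0)_k = 0 for k > N. *)
Definition hyp2F1_upto (R : fieldType) (a0 a1 b1 z : R) (N : nat) : R :=
  \sum_(k < N.+1) hyp2F1_term a0 a1 b1 z k.

(* Main.v *)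
Require Import Defs.
From HB Require Import structures.
From mathcomp Require Import all_boot all_order all_algebra.
From mathcomp Require Import ring lra zify.
Import GRing.Theory Num.Theory.
Local Open Scope ring_scope.

Definition P3 {R : realFieldType} (a : R) : R := a * (a + 1) * (a + 2%:R).
Definition P4 {R : realFieldType} (a : R) : R := a * (a + 1) * (a + 2%:R) * (a + 3%:R).
Definition P2 {R : realFieldType} (a : R) : R := a * (a + 1).
Definition pL {R : realFieldType} (x : R) : R := -(3%:R * x) - 3%:R.
Definition qL {R : realFieldType} (x : R) : R := pL x + 1 / 2%:R.
Definition rL {R : realFieldType} (x : R) : R := -(4%:R * x) - 4%:R + 2%:R / 3%:R.
Definition aL {R : realFieldType} (x : R) : R := 4%:R * (12%:R * x + 1) * (12%:R * x + 7%:R).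
Definition bL {R : realFieldType} (x : R) : R := - (2%:R * (3%:R * x + 2%:R) * (6%:R * x + 1)).
Definition PL {R : realFieldType} (x k : R) : R :=
  (3%:R * x + 2%:R) * (6%:R * x + 1) / 16%:R * (let y := 3%:R * x in
  k * (-432%:R - 3178%:R * y - (2%:R * 3719%:R) * y^+2 - (2%:R * 3652%:R) * y^+3 - 3128%:R * y^+4 - 480%:R * y^+5)
  + k^+2 * (1625%:R + (5%:R * 1343%:R) * y + (2%:R * 4998%:R) * y^+2 + (2%:R * 3008%:R) * y^+3 + 1224%:R * y^+4)
  + k^+3 * (-812%:R - 2456%:R * y - 2760%:R * y^+2 - 912%:R * y^+3)
  + k^+4 * (-701%:R - 741%:R * y - 58%:R * y^+2)
  + k^+5 * (560%:R + 320%:R * y) + k^+6 * (-96%:R)).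

Definition pF {R : realFieldType} (x : R) : R := - x - 1.
Definition qF {R : realFieldType} (x : R) : R := pF x + 1 / 2%:R.
Definition rF {R : realFieldType} (x : R) : R := -(2%:R * x) - 2%:R + 5%:R / 6%:R.
Definition aF {R : realFieldType} (x : R) : R := (12%:R * x + 1) * (12%:R * x + 7%:R).
Definition PF {R : realFieldType} (x k : R) : R :=
  (k * (-15%:R - 226%:R * x - 588%:R * x^+2 - 432%:R * x^+3)
  + k^+2 * (104%:R + 468%:R * x + 504%:R * x^+2) + k^+3 * (-84%:R - 144%:R * x)) / 2%:R.

Lemma pochS {R : realFieldType} (a : R) k : poch a k.+1 = poch a k * (a + k%:R).
Proof. by rewrite /poch big_ord_recr. Qed.

Lemma poch0 {R : realFieldType} (a : R) : poch a 0 = 1.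
Proof. by rewrite /poch big_ord0. Qed.

Lemma poch_add {R : realFieldType} (a : R) m k : poch a (m + k) = poch a m * poch (a + m%:R) k.
Proof.
elim: k => [|k IH]; first by rewrite addn0 poch0 mulr1.
by rewrite addnS !pochS IH -mulrA natrD addrA.
Qed.

Lemma poch_shift {R : realFieldType} (a : R) m k : poch a m * poch (a + m%:R) k = poch a k * poch (a + k%:R) m.
Proof. by rewrite -!poch_add addnC. Qed.

Lemma poch_shiftD {R : realFieldType} (a : R) m k : poch a m != 0 ->
  poch (a + m%:R) k = poch a k * poch (a + k%:R) m / poch a m.
Proof. by move=> nz; rewrite -poch_shift [poch a m * _]mulrC mulfK. Qed.

Lemma poch_negnat {R : realFieldType} m k : (m < k)%N -> poch (- m%:R : R) k = 0.
Proof. by move=> /subnKC <-; rewrite poch_add pochS addNr mulr0 mul0r. Qed.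

Lemma poch_neq0 {R : realFieldType} (a : R) k : (forall i : nat, a + i%:R != 0) -> poch a k != 0.
Proof.
move=> H; elim: k => [|k IH]; first by rewrite poch0 oner_neq0.
by rewrite pochS mulf_neq0.
Qed.

Lemma poch1 {R : realFieldType} (a : R) : poch a 1 = a.
Proof. by rewrite pochS poch0 mul1r addr0. Qed.
Lemma poch2 {R : realFieldType} (a : R) : poch a 2 = P2 a.
Proof. by rewrite !pochS poch0 mul1r addr0. Qed.
Lemma poch3 {R : realFieldType} (a : R) : poch a 3 = P3 a.
Proof. by rewrite !pochS poch0 mul1r addr0. Qed.
Lemma poch4 {R : realFieldType} (a : R) : poch a 4 = P4 a.
Proof. by rewrite !pochS poch0 mul1r addr0. Qed.

Lemma nz_int {R : realFieldType} (w : R) (d u v : nat) : w * d%:R = u%:R - v%:R -> u != v -> w != 0.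
Proof.
move=> H uv; apply/eqP => w0; move: H; rewrite w0 mul0r => /eqP.
by rewrite eq_sym subr_eq0 eqr_nat (negbTE uv).
Qed.

Lemma telesc {R : realFieldType} (u g : nat -> R) M : (forall k, u k = g k.+1 - g k) ->
  \sum_(k < M) u k = g M - g 0.
Proof.
move=> H; under eq_bigr do rewrite H.
by rewrite -(big_mkord xpredT (fun k => g k.+1 - g k)) telescope_sumr.
Qed.

Lemma sum_trunc {R : realFieldType} (f : nat -> R) N M : (N <= M)%N -> (forall k, (N <= k)%N -> f k = 0) ->
  \sum_(k < M) f k = \sum_(k < N) f k.
Proof.
move=> NM H; rewrite -!(big_mkord xpredT) (@big_cat_nat _ _ _ N 0 M _ _ (leq0n N) NM) /=.
rewrite [X in _ + X]big_nat_cond [X in _ + X]big1 ?addr0 // => k /andP[/andP[Nk _] _]; exact: H.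
Qed.

Ltac nzt u v := apply: (@nz_int _ _ 1 u v); [rewrite ?natrD ?natrM; ring | lia].
Ltac nzL n k := first [ nzt (3*k)%N (12*n+1)%N | nzt (3*k)%N (12*n+4)%N | nzt (3*k)%N (12*n+7)%N
  | nzt (3*k)%N (12*n+10)%N | nzt (3*k+3)%N (12*n+1)%N | nzt 0%N (6*n+1)%N | nzt 0%N (6*n+3)%N
  | nzt 0%N (6*n+5)%N | nzt 0%N (3*n+1)%N | nzt 0%N (3*n+2)%N | nzt 0%N (3*n+3)%N | nzt (k+1)%N 0%N ].

Lemma keyL {R : realFieldType} (n k : nat) (T : R) : let x : R := n%:R in let kk : R := k%:R in
  aL x * T + bL x * (T * P3 (pL x + kk) * P3 (qL x + kk) * P4 (rL x)
      / (P3 (pL x) * P3 (qL x) * P4 (rL x + kk)))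
  = T * (pL x + kk) * (qL x + kk) / (rL x + kk) * (4%:R / 3%:R) / (kk + 1)
      * PL x (kk + 1) * P4 (rL x) / (P3 (pL x) * P3 (qL x) * P4 (rL x + (kk + 1)))
    - T * PL x kk * P4 (rL x) / (P3 (pL x) * P3 (qL x) * P4 (rL x + kk)).
Proof.
rewrite /= /P3 /P4 /PL /aL /bL /qL /rL /pL.
field.
rewrite -?andbA; repeat (apply/andP; split).
all: nzL n k.
Qed.

Lemma keyF {R : realFieldType} (n k : nat) (T : R) : let x : R := n%:R in let kk : R := k%:R in
  aF x * T + bL x * (T * (pF x + kk) * (qF x + kk) * P2 (rF x)
      / (pF x * qF x * P2 (rF x + kk)))
  = T * (pF x + kk) * (qF x + kk) / (rF x + kk) * 1 / (kk + 1)
      * PF x (kk + 1) * P2 (rF x) / (pF x * qF x * P2 (rF x + (kk + 1)))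
    - T * PF x kk * P2 (rF x) / (pF x * qF x * P2 (rF x + kk)).
Proof.
rewrite /= /P2 /PF /aF /bL /qF /rF /pF.
field.
rewrite -?andbA; repeat (apply/andP; split).
all: first [ nzt (6*k)%N (12*n+1)%N | nzt (6*k)%N (12*n+7)%N | nzt 0%N (2*n+1)%N | nzt 0%N (n+1)%N
  | nzt (6*k+6)%N (12*n+1)%N | nzt (k+1)%N 0%N ].
Qed.

Lemma nzP3p {R : realFieldType} n : P3 (pL (n%:R : R)) != 0.
Proof.
have h : 0 <= (n%:R : R) := ler0n _ n. rewrite /P3 /pL.
by repeat apply: mulf_neq0; apply: ltr0_neq0; lra.
Qed.
Lemma nzP3q {R : realFieldType} n : P3 (qL (n%:R : R)) != 0.
Proof.
have h : 0 <= (n%:R : R) := ler0n _ n. rewrite /P3 /qL /pL.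
by repeat apply: mulf_neq0; apply: ltr0_neq0; lra.
Qed.
Lemma nzP4r {R : realFieldType} n : P4 (rL (n%:R : R)) != 0.
Proof.
have h : 0 <= (n%:R : R) := ler0n _ n. rewrite /P4 /rL.
by repeat apply: mulf_neq0; apply: ltr0_neq0; lra.
Qed.
Lemma nzr {R : realFieldType} n y : rL (n%:R : R) + y%:R != 0.
Proof.
have E : (rL (n%:R : R) + y%:R) * 3%:R = (3*y+2)%N%:R - (12*n+12)%N%:R.
  by rewrite /rL (natrD _ (3*y) 2) (natrD _ (12*n) 12) (natrM _ 3 y) (natrM _ 12 n); field.
apply: (@nz_int _ _ _ _ _ E).
lia.
Qed.
Lemma nzP4rk {R : realFieldType} n k : P4 (rL (n%:R : R) + k%:R) != 0.
Proof.
have h0 := @nzr R n k; have h1 := @nzr R n k.+1; have h2 := @nzr R n (k+2); have h3 := @nzr R n (k+3).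
rewrite -(natr1 k) addrA in h1. rewrite (natrD _ k 2) addrA in h2. rewrite (natrD _ k 3) addrA in h3.
rewrite /P4.
by repeat apply: mulf_neq0.
Qed.
Lemma nzpochr {R : realFieldType} n k : poch (rL (n%:R : R)) k != 0.
Proof. by apply: poch_neq0 => i; apply: nzr. Qed.

Definition TL {R : realFieldType} (n k : nat) : R :=
  hyp2F1_term (pL (n%:R : R)) (qL n%:R) (rL n%:R) (4%:R / 3%:R) k.

Lemma nzfact {R : realFieldType} k : (k`!)%:R != 0 :> R.
Proof. by rewrite pnatr_eq0 -lt0n fact_gt0. Qed.

Lemma t0L {R : realFieldType} n k : hyp2F1_term (- (3 * n)%:R : R) (- (3 * n)%:R + 1 / 2%:R)
    (- (4 * n)%:R + 2%:R / 3%:R) (4%:R / 3%:R) k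
  = TL n k * P3 (pL n%:R + k%:R) * P3 (qL n%:R + k%:R) * P4 (rL n%:R)
     / (P3 (pL n%:R) * P3 (qL n%:R) * P4 (rL (n%:R : R) + k%:R)).
Proof.
have Eq : (- (3 * n)%:R + 1 / 2%:R : R) = qL n%:R + 3%:R by rewrite /qL /pL natrM; ring.
have Er : (- (4 * n)%:R + 2%:R / 3%:R : R) = rL n%:R + 4%:R by rewrite /rL natrM; ring.
have Ep : (- (3 * n)%:R : R) = pL n%:R + 3%:R by rewrite /pL natrM; ring.
rewrite Eq Er Ep /TL /hyp2F1_term.
have h1 := @nzP3p R n; have h2 := @nzP3q R n; have h3 := @nzP4r R n.
rewrite (@poch_shiftD R (pL n%:R) 3 k) ?poch3 // (@poch_shiftD R (qL n%:R) 3 k) ?poch3 //.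
rewrite (@poch_shiftD R (rL n%:R) 4 k) ?poch4 //.
have h4 := @nzP4rk R n k; have h5 := @nzpochr R n k.
have h6 := @nzfact R k.
field; by rewrite h1 h2 h3 h4 h5 h6.
Qed.

Lemma t1pL {R : realFieldType} n : (- (3 * n.+1)%:R : R) = pL n%:R.
Proof. by rewrite /pL mulnS natrD natrM; ring. Qed.

Lemma t1L {R : realFieldType} n k : hyp2F1_term (- (3 * n.+1)%:R : R) (- (3 * n.+1)%:R + 1 / 2%:R)
    (- (4 * n.+1)%:R + 2%:R / 3%:R) (4%:R / 3%:R) k = TL n k.
Proof.
have Er : (- (4 * n.+1)%:R + 2%:R / 3%:R : R) = rL n%:R by rewrite /rL mulnS natrD natrM; ring.
by rewrite Er t1pL.
Qed.

Lemma TLS {R : realFieldType} n k : TL n k.+1 = TL n k * (pL (n%:R : R) + k%:R) * (qL n%:R + k%:R)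
   / (rL n%:R + k%:R) * (4%:R / 3%:R) / (k%:R + 1).
Proof.
rewrite /TL /hyp2F1_term !pochS exprS factS natrM -(natr1 k).
have h5 := @nzpochr R n k; have h6 := @nzfact R k; have h7 := @nzr R n k.
have h8 : (k%:R + 1 : R) != 0 by rewrite natr1 pnatr_eq0.
field; by rewrite h5 h6 h7 h8.
Qed.

Definition Lsum {R : realFieldType} n : R :=
  hyp2F1_upto (- (3 * n)%:R : R) (- (3 * n)%:R + 1 / 2%:R)
    (- (4 * n)%:R + 2%:R / 3%:R) (4%:R / 3%:R) (3 * n).

Lemma stepL {R : realFieldType} n : aL (n%:R : R) * Lsum n.+1 + bL (n%:R : R) * Lsum n = 0.
Proof.
pose x : R := n%:R.
pose g k := TL n k * PL x k%:R * P4 (rL x) / (P3 (pL x) * P3 (qL x) * P4 (rL x + k%:R)).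
have s1 : Lsum n.+1 = \sum_(k < (3*n.+1).+1) (TL n k : R).
  by rewrite /Lsum /hyp2F1_upto; apply: eq_bigr => k _; rewrite t1L.
have s0 : (Lsum n : R) = \sum_(k < (3*n.+1).+1) hyp2F1_term (- (3 * n)%:R : R) (- (3 * n)%:R + 1 / 2%:R)
    (- (4 * n)%:R + 2%:R / 3%:R) (4%:R / 3%:R) k.
  rewrite /Lsum /hyp2F1_upto [RHS](@sum_trunc R _ (3*n).+1 (3*n.+1).+1) //; first lia.
  by move=> k hk; rewrite /hyp2F1_term poch_negnat // !mul0r.
have H : forall k, aL x * TL n k + bL x * hyp2F1_term (- (3 * n)%:R : R) (- (3 * n)%:R + 1 / 2%:R)
    (- (4 * n)%:R + 2%:R / 3%:R) (4%:R / 3%:R) k = g k.+1 - g k.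
  move=> k; rewrite t0L /g TLS -(natr1 k).
  exact: (keyL n k (TL n k)).
rewrite s1 s0 !mulr_sumr -big_split /= (telesc _ _ _ H) /g.
have TLz : TL n (3*n.+1).+1 = 0 :> R.
  by rewrite /TL /hyp2F1_term -t1pL poch_negnat // !mul0r.
have PL0 : PL x 0%:R = 0 by rewrite /PL; ring.
by rewrite TLz PL0 !(mul0r, mulr0) subrr.
Qed.

Lemma nzpF {R : realFieldType} n : pF (n%:R : R) != 0.
Proof. have h : 0 <= (n%:R : R) := ler0n _ n. rewrite /pF. by apply: ltr0_neq0; lra. Qed.
Lemma nzqF {R : realFieldType} n : qF (n%:R : R) != 0.
Proof. have h : 0 <= (n%:R : R) := ler0n _ n. rewrite /qF /pF. by apply: ltr0_neq0; lra. Qed.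
Lemma nzP2r {R : realFieldType} n : P2 (rF (n%:R : R)) != 0.
Proof.
have h : 0 <= (n%:R : R) := ler0n _ n. rewrite /P2 /rF.
by repeat apply: mulf_neq0; apply: ltr0_neq0; lra.
Qed.
Lemma nzrF {R : realFieldType} n y : rF (n%:R : R) + y%:R != 0.
Proof.
have E : (rF (n%:R : R) + y%:R) * 6%:R = (6*y+5)%N%:R - (12*n+12)%N%:R.
  by rewrite /rF (natrD _ (6*y) 5) (natrD _ (12*n) 12) (natrM _ 6 y) (natrM _ 12 n); field.
apply: (@nz_int _ _ _ _ _ E).
lia.
Qed.
Lemma nzP2rk {R : realFieldType} n k : P2 (rF (n%:R : R) + k%:R) != 0.
Proof.
have h0 := @nzrF R n k; have h1 := @nzrF R n k.+1.
rewrite -(natr1 k) addrA in h1.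
rewrite /P2.
by repeat apply: mulf_neq0.
Qed.
Lemma nzpochrF {R : realFieldType} n k : poch (rF (n%:R : R)) k != 0.
Proof. by apply: poch_neq0 => i; apply: nzrF. Qed.

Definition TF {R : realFieldType} (n k : nat) : R :=
  hyp2F1_term (pF (n%:R : R)) (qF n%:R) (rF n%:R) 1 k.

Lemma t0F {R : realFieldType} n k : hyp2F1_term (- n%:R : R) (- n%:R + 1 / 2%:R)
    (- (2 * n)%:R + 5%:R / 6%:R) 1 k
  = TF n k * (pF n%:R + k%:R) * (qF n%:R + k%:R) * P2 (rF n%:R)
     / (pF n%:R * qF n%:R * P2 (rF (n%:R : R) + k%:R)).
Proof.
have Eq : (- n%:R + 1 / 2%:R : R) = qF n%:R + 1%:R by rewrite /qF /pF; ring.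
have Er : (- (2 * n)%:R + 5%:R / 6%:R : R) = rF n%:R + 2%:R by rewrite /rF natrM; ring.
have Ep : (- n%:R : R) = pF n%:R + 1%:R by rewrite /pF; ring.
rewrite Eq Er Ep /TF /hyp2F1_term.
have h1 := @nzpF R n; have h2 := @nzqF R n; have h3 := @nzP2r R n.
rewrite (@poch_shiftD R (pF n%:R) 1 k) ?poch1 // (@poch_shiftD R (qF n%:R) 1 k) ?poch1 //.
rewrite (@poch_shiftD R (rF n%:R) 2 k) ?poch2 //.
have h4 := @nzP2rk R n k; have h5 := @nzpochrF R n k.
have h6 := @nzfact R k.
field; by rewrite h1 h2 h3 h4 h5 h6.
Qed.

Lemma t1pF {R : realFieldType} n : (- (n.+1)%:R : R) = pF n%:R.
Proof. by rewrite /pF -natr1; ring. Qed.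

Lemma t1F {R : realFieldType} n k : hyp2F1_term (- (n.+1)%:R : R) (- (n.+1)%:R + 1 / 2%:R)
    (- (2 * n.+1)%:R + 5%:R / 6%:R) 1 k = TF n k.
Proof.
have Er : (- (2 * n.+1)%:R + 5%:R / 6%:R : R) = rF n%:R by rewrite /rF mulnS natrD natrM; ring.
by rewrite Er t1pF.
Qed.

Lemma TFS {R : realFieldType} n k : TF n k.+1 = TF n k * (pF (n%:R : R) + k%:R) * (qF n%:R + k%:R)
   / (rF n%:R + k%:R) * 1 / (k%:R + 1).
Proof.
rewrite /TF /hyp2F1_term !pochS exprS factS natrM -(natr1 k).
have h5 := @nzpochrF R n k; have h6 := @nzfact R k; have h7 := @nzrF R n k.
have h8 : (k%:R + 1 : R) != 0 by rewrite natr1 pnatr_eq0.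
field; by rewrite h5 h6 h7 h8.
Qed.

Definition Fsum {R : realFieldType} n : R :=
  hyp2F1_upto (- n%:R : R) (- n%:R + 1 / 2%:R) (- (2 * n)%:R + 5%:R / 6%:R) 1 n.

Lemma stepF {R : realFieldType} n : aF (n%:R : R) * Fsum n.+1 + bL (n%:R : R) * Fsum n = 0.
Proof.
pose x : R := n%:R.
pose g k := TF n k * PF x k%:R * P2 (rF x) / (pF x * qF x * P2 (rF x + k%:R)).
have s1 : Fsum n.+1 = \sum_(k < n.+2) (TF n k : R).
  by rewrite /Fsum /hyp2F1_upto; apply: eq_bigr => k _; rewrite t1F.
have s0 : (Fsum n : R) = \sum_(k < n.+2) hyp2F1_term (- n%:R : R) (- n%:R + 1 / 2%:R)
    (- (2 * n)%:R + 5%:R / 6%:R) 1 k.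
  rewrite /Fsum /hyp2F1_upto [RHS](@sum_trunc R _ n.+1 n.+2) //.
  by move=> k hk; rewrite /hyp2F1_term poch_negnat // !mul0r.
have H : forall k, aF x * TF n k + bL x * hyp2F1_term (- n%:R : R) (- n%:R + 1 / 2%:R)
    (- (2 * n)%:R + 5%:R / 6%:R) 1 k = g k.+1 - g k.
  move=> k; rewrite t0F /g TFS -(natr1 k).
  exact: (keyF n k (TF n k)).
rewrite s1 s0 !mulr_sumr -big_split /= (telesc _ _ _ H) /g.
have TFz : TF n n.+2 = 0 :> R.
  by rewrite /TF /hyp2F1_term -t1pF poch_negnat // !mul0r.
have PF0 : PF x 0%:R = 0 by rewrite /PF; ring.
by rewrite TFz PF0 !(mul0r, mulr0) subrr.
Qed.

Lemma Lsum0 {R : realFieldType} : Lsum 0 = 1 :> R.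
Proof.
rewrite /Lsum /hyp2F1_upto muln0 big_ord_recl big_ord0 /hyp2F1_term /poch !big_ord0 addr0 expr0 fact0.
by field.
Qed.
Lemma Fsum0 {R : realFieldType} : Fsum 0 = 1 :> R.
Proof.
rewrite /Fsum /hyp2F1_upto big_ord_recl big_ord0 /hyp2F1_term /poch !big_ord0 addr0 expr0 fact0.
by field.
Qed.

Lemma mainLF {R : realFieldType} n : (Lsum n : R) = (4%:R ^+ n)^-1 * Fsum n.
Proof.
elim: n => [|n IH]; first by rewrite Lsum0 Fsum0 expr0 invr1 mul1r.
have eL := @stepL R n; have eF := @stepF R n.
have h : 0 <= (n%:R : R) := ler0n _ n.
have aFnz : aF (n%:R : R) != 0 by rewrite /aF; apply: lt0r_neq0; nra.
have aLe : aL (n%:R : R) = 4%:R * aF n%:R by rewrite /aL /aF; ring.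
move/eqP: eL; rewrite addr_eq0 => /eqP eL.
move/eqP: eF; rewrite addr_eq0 => /eqP eF.
have L1 : Lsum n.+1 = - (bL (n%:R : R) * Lsum n) / aL n%:R.
  by rewrite -eL mulrAC mulfV ?mul1r // aLe mulf_neq0 // pnatr_eq0.
have F1 : Fsum n.+1 = - (bL (n%:R : R) * Fsum n) / aF n%:R.
  by rewrite -eF mulrAC mulfV ?mul1r.
have p4 : (4%:R ^+ n : R) != 0 by rewrite expf_neq0 // pnatr_eq0.
rewrite L1 F1 IH aLe exprS.
by field; rewrite aFnz p4.
Qed.

Theorem lemma2p1 (n : nat) :
  hyp2F1_upto (- (3 * n)%:R : rat) (- (3 * n)%:R + 1 / 2%:R)
    (- (4 * n)%:R + 2%:R / 3%:R) (4%:R / 3%:R) (3 * n)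
  = (4%:R ^+ n)^-1 *
    hyp2F1_upto (- n%:R : rat) (- n%:R + 1 / 2%:R)
      (- (2 * n)%:R + 5%:R / 6%:R) 1 n.
Proof. exact: (@mainLF rat n). Qed.
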